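(* Let $m,N\ge1$, put $d=m^2+1$ and $n=m+d$, and let $\pi\colon\mathbb R^n\to\mathbb R^m$ be the projection onto the first $m$ coordinates. Define $\mathfrak Y\colon\mathbb R^m\times C(\mathbb R^m\times\mathcal M_{m\times m},\mathbb R^m)\times\mathcal M_{m\times m}^N\to\mathbb R^m$ by $\mathfrak Y(\mathbf y,\sigma,\theta)\coloneqq\mathbf y_N$, where $\theta=(\theta_0,\dots,\theta_{N-1})$, $\mathbf y_0=\mathbf y$ and $\mathbf y_{k+1}=\mathbf y_k+\sigma(\mathbf y_k,\theta_k)$; and define $\mathfrak X\colon\mathbb R^n\times C(\mathbb R^n,\mathbb R^n)^d\times(\mathbb R^d)^{N+1}\to\mathbb R^n$ by $\mathfrak X(\mathbf x,f,\mathbf w)\coloneqq\mathbf x_N$, where $\mathbf w=(\mathbf w_0,\dots,\mathbf w_N)$, $\mathbf x_0=\mathbf x$ and $\mathbf x_{k+1}=\mathbf x_k+\sum_{\mu=1}^df_\mu(\mathbf x_k)(\mathbf w^\mu_{k+1}-\mathbf w^\mu_k)$. Then \[ \mathfrak Y\big(\mathbb R^m\times C(\mathbb R^m\times\mathcal M_{m\times m},\mathbb R^m)\times\mathcal M_{m\times m}^N\big)\subset\pi\circ\mathfrak X\big(\mathbb R^n\times C(\mathbb R^n,\mathbb R^n)^d\times(\mathbb R^d)^{N+1}\big). \]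
   Context: $\mathcal M_{m\times m}$ denotes the space of real $m\times m$ matrices, $C(A,B)$ the continuous maps from $A$ to $B$; the time indices run over $k=0,\dots,N-1$. *)

(* Defs.v *)
From HB Require Import structures.
From mathcomp Require Import all_boot all_order all_algebra.
From mathcomp Require Import all_classical all_reals all_analysis.
Set Implicit Arguments. Unset Strict Implicit. Unset Printing Implicit Defensive.
Import Order.TTheory GRing.Theory Num.Theory.
Import numFieldNormedType.Exports.
Local Open Scope ring_scope.

(* Vectors of R^k are row vectors 'rV[R]_k; M_{m x m} is 'M[R]_m.
   Time indices k range over 'I_N, enumerated in increasing order. *)

Definition frakY (R : realType) (m N : nat) (y : 'rV[R]_m)
  (sigma : 'rV[R]_m * 'M[R]_m -> 'rV[R]_m) (theta : 'I_N -> 'M[R]_m) : 'rV[R]_m :=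
  foldl (fun yk (k : 'I_N) => yk + sigma (yk, theta k)) y (enum 'I_N).

(* frakX x f w = x_N, x_0 = x,
   x_{k+1} = x_k + sum_mu f_mu(x_k) (w_{k+1}^mu - w_k^mu);
   w : 'I_(N+1) -> R^d; w_k = w (widen k), w_{k+1} = w (lift ord0 k). *)
Definition frakX (R : realType) (n d N : nat) (x : 'rV[R]_n)
  (f : 'I_d -> 'rV[R]_n -> 'rV[R]_n) (w : 'I_N.+1 -> 'rV[R]_d) : 'rV[R]_n :=
  foldl (fun xk (k : 'I_N) =>
           xk + \sum_(mu < d)
                  (w (lift ord0 k) 0 mu - w (widen_ord (leqnSn N) k) 0 mu) *: f mu xk)
        x (enum 'I_N).

(* Main.v *)
Require Import Defs.
From HB Require Import structures.
From mathcomp Require Import all_boot all_order all_algebra.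
From mathcomp Require Import all_classical all_reals all_analysis.
Import Order.TTheory GRing.Theory Num.Theory.
Import numFieldNormedType.Exports.
Local Open Scope ring_scope.

Lemma cont_row_mx_l (R : realType) (p q : nat) (b : 'rV[R]_q) :
  continuous (fun a : 'rV[R]_p => row_mx a b).
Proof.
move=> u A /nbhs_ballP[e /= e0 eA].
apply/nbhs_ballP; exists e => //= v [_ uv]; apply: eA; split => // i j.
rewrite !mxE; case: splitP => [k _|k _].
- exact: uv.
- by rewrite /ball /= subrr normr0.
Qed.

Lemma cont_decode (R : realType) (p q r : nat) (g : 'I_p -> 'I_q -> 'I_r) :
  continuous (fun v : 'rV[R]_r => \matrix_(i, j) v 0 (g i j)).
Proof.
move=> u A /nbhs_ballP[e /= e0 eA].
apply/nbhs_ballP; exists e => //= v [_ uv]; apply: eA; split => // i j.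
rewrite !mxE; exact: uv.
Qed.

Theorem propositionA1 (R : realType) (m N : nat) (hm : (1 <= m)%N) (hN : (1 <= N)%N)
  (y : 'rV[R]_m) (sigma : 'rV[R]_m * 'M[R]_m -> 'rV[R]_m) (theta : 'I_N -> 'M[R]_m) :
  continuous sigma ->
  exists (x : 'rV[R]_(m + (m ^ 2).+1))
         (f : 'I_(m ^ 2).+1 -> 'rV[R]_(m + (m ^ 2).+1) -> 'rV[R]_(m + (m ^ 2).+1))
         (w : 'I_N.+1 -> 'rV[R]_(m ^ 2).+1),
    (forall mu, continuous (f mu)) /\
    lsubmx (frakX x f w) = frakY y sigma theta.
Proof.
move=> csig.
case: N hN theta => [//|N'] _ theta.
case: m hm y sigma theta csig => [//|m'] _ y sigma theta csig.
set m := m'.+1.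
have gP : forall (i j : 'I_m), ((i * m + j).+1 < (m ^ 2).+1)%N.
  move=> i j; rewrite ltnS expnS expn1.
  have := ltn_ord i; have := ltn_ord j; rewrite -/m => hj hi.
  have : (i * m + j < i * m + m)%N by rewrite ltn_add2l.
  move=> h; apply: (leq_trans h); rewrite -mulSnr; exact: leq_mul.
pose g (i j : 'I_m) : 'I_(m ^ 2).+1 := inord (i * m + j).+1.
pose decode (v : 'rV[R]_(m ^ 2).+1) : 'M[R]_m := \matrix_(i, j) v 0 (g i j).
pose W (t : nat) : 'rV[R]_(m ^ 2).+1 :=
  \row_mu (if mu == ord0 then t%:R
           else theta (inord t) (inord ((mu.-1) %/ m)) (inord ((mu.-1) %% m))).
pose f (mu : 'I_(m ^ 2).+1) (x : 'rV[R]_(m + (m ^ 2).+1)) :=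
  row_mx (if mu == ord0 then sigma (lsubmx x, decode (rsubmx x)) else 0)
         (delta_mx 0 mu : 'rV[R]_(m ^ 2).+1).
pose w (k : 'I_N'.+2) := W k.
exists (row_mx y (W 0%N)), f, w; split.
  have cpair : continuous (fun x : 'rV[R]_(m + (m ^ 2).+1) => (lsubmx x, decode (rsubmx x))).
    move=> z; eapply (@cvg_pair _ _ _ _ _ _ _ _ _ lsubmx (fun x => decode (rsubmx x))).
      exact: continuous_lsubmx.
    have h := (continuous_comp (@continuous_rsubmx R 1 _ _ z) (@cont_decode R _ _ _ g (rsubmx z))).
    exact h.
  move=> mu; rewrite /f; case: (mu == ord0); last first.
    by move=> x; apply: cst_continuous.
  move=> x.
  apply: (continuous_comp (f := fun x => sigma (lsubmx x, decode (rsubmx x)))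
            (g := fun a => row_mx a (delta_mx 0 mu))); last first.
    exact: cont_row_mx_l.
  apply: (continuous_comp (f := fun x => (lsubmx x, decode (rsubmx x)))
            (g := sigma)); last exact: csig.
  exact: cpair.
have decW : forall k : 'I_N'.+1, decode (W k) = theta k.
  move=> k; apply/matrixP => i j; rewrite !mxE.
  have hg : (g i j : nat) = (i * m + j).+1 by rewrite inordK.
  have -> : (g i j == ord0) = false by apply/negbTE; rewrite -val_eqE /= hg.
  rewrite hg /= divnMDl // modnMDl divn_small // modn_small //.
  by rewrite addn0 !inord_val.
have key : forall (s : seq 'I_N'.+1) (t : nat) (x : 'rV[R]_(m + (m ^ 2).+1)),
    map val s = iota t (size s) -> rsubmx x = W t ->
    lsubmx (foldl (fun xk (k : 'I_N'.+1) =>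
           xk + \sum_(mu < (m ^ 2).+1)
                  (w (lift ord0 k) 0 mu - w (widen_ord (leqnSn N'.+1) k) 0 mu) *: f mu xk)
        x s) = foldl (fun yk (k : 'I_N'.+1) => yk + sigma (yk, theta k)) (lsubmx x) s.
  elim=> [//|k s IH] t x /= [hk hs] hx.
  have -> : lsubmx x + sigma (lsubmx x, theta k) =
      lsubmx (x + \sum_(mu < (m ^ 2).+1)
                  (w (lift ord0 k) 0 mu - w (widen_ord (leqnSn N'.+1) k) 0 mu) *: f mu x).
    rewrite linearD /= linear_sum /=.
    rewrite (bigD1 ord0) //= big1 ?addr0; last first.
      move=> mu /negbTE hmu; rewrite linearZ /= /f hmu row_mxKl scaler0 //.
    rewrite linearZ /= /f eqxx row_mxKl /w /= hx -hk decW.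
    by rewrite !mxE eqxx /= -natr1 addrAC subrr add0r scale1r.
  apply: (IH t.+1) => //.
  rewrite linearD /= linear_sum /= hx.
  under eq_bigr => mu _ do rewrite linearZ /= /f row_mxKr.
  apply/matrixP => i j; rewrite !mxE summxE.
  rewrite (bigD1 j) //= big1 ?addr0; last first.
    by move=> mu /negbTE hmu; rewrite !mxE [j == mu]eq_sym hmu andbF mulr0.
  rewrite !mxE !eqxx /w /= -hk ord1 eqxx andbT mulr1 /bump leq0n add1n.
  by rewrite addrC subrK.
rewrite /frakX /frakY.
have := key (enum 'I_N'.+1) 0%N (row_mx y (W 0%N)); rewrite row_mxKl; apply.
  by rewrite val_enum_ord size_enum_ord.
by rewrite row_mxKr.
Unshelve. all: try apply: mx_nbhs_filter. all: try apply: nbhs_pfilter.  Qed.
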